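(* Let $\mathcal{N}$ be an acyclic, weakly non-deterministic negotiation with a fixed topological order $\preceq$ of its graph, and let $C$ be a reachable configuration. Let $n$ be the $\preceq$-smallest node such that $C(d)=\{n\}$ for some deterministic process $d$. Then: (1) if $\mathcal{N}$ is sound, then $n$ is enabled in $C$; (2) for every run $C\xrightarrow{w}C_{\mathit{fin}}$, every node $n'$ occurring in $w$ satisfies $n\preceq n'$.
   Context: A negotiation is a tuple $\mathcal{N}=(\mathit{Proc},N,\mathit{dom},R,\delta)$ where $\mathit{Proc}$ is a finite set of processes, $N$ is a finite set of nodes, $\mathit{dom}:N\to 2^{\mathit{Proc}}\setminus\{\emptyset\}$, there are two distinguished nodes $n_{\mathit{init}},n_{\mathit{fin}}$ with $\mathit{dom}(n_{\mathit{init}})=\mathit{dom}(n_{\mathit{fin}})=\mathit{Proc}$, $R$ is a set of results, each node $n$ has a set $\mathit{out}(n)\subseteq R$ of results (nonempty for $n\neq n_{\mathit{fin}}$), and $\delta(n,a,p)\subseteq N$ is defined and nonempty exactly when $a\in\mathit{out}(n)$ and $p\in\mathit{dom}(n)$, with $p\in\mathit{dom}(n')$ for all $n'\in\delta(n,a,p)$. A configuration is a map $C$ assigning to each process a nonempty set of nodes; $C_{\mathit{init}}(p)=\{n_{\mathit{init}}\}$, $C_{\mathit{fin}}(p)=\{n_{\mathit{fin}}\}$. A node $n$ is enabled in $C$ if $n\in C(p)$ for all $p\in\mathit{dom}(n)$. If $n$ is enabled and $a\in\mathit{out}(n)$ then $C\xrightarrow{(n,a)}C'$ with $C'(p)=\delta(n,a,p)$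 for $p\in\mathit{dom}(n)$, $C'(p)=C(p)$ otherwise. A run is a sequence of such steps; a configuration is reachable if some finite run from $C_{\mathit{init}}$ leads to it; $\mathcal{N}$ is sound if every finite run from $C_{\mathit{init}}$ can be extended to a finite run ending in $C_{\mathit{fin}}$. The graph of $\mathcal{N}$ has vertex set $N$ and edges $n\to n'$ whenever $n'\in\delta(n,a,p)$ for some $a,p$; $\mathcal{N}$ is acyclic if this graph is, and a topological order is a linear order $\preceq$ on $N$ with $m\preceq n$ whenever there is an edge $m\to n$. A process $p$ is deterministic if $\delta(n,a,p)$ is a singleton for all $n$ with $p\in\mathit{dom}(n)$ and $a\in\mathit{out}(n)$; $\mathcal{N}$ is weakly non-deterministic if every node $n$ has a deterministic process in $\mathit{dom}(n)$. *)

(* Defs.v *)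
From mathcomp Require Import all_boot.
From Stdlib Require List.

Set Implicit Arguments.
Unset Strict Implicit.
Unset Printing Implicit Defensive.

Record negotiation (P N : finType) (R : Type) := Negotiation {
  dom : N -> {set P};
  n_init : N;
  n_fin : N;
  out : N -> R -> bool;
  delta : N -> R -> P -> {set N}; (* meaningful only when out n a and p \in dom n *)
  dom_nonempty : forall n, dom n != set0;
  dom_init : dom n_init = [set: P];
  dom_fin : dom n_fin = [set: P];
  out_nonempty : forall n, n != n_fin -> exists a, out n a;
  delta_nonempty : forall n a p, out n a -> p \in dom n -> delta n a p != set0;
  delta_dom : forall n a p n', out n a -> p \in dom n ->
                n' \in delta n a p -> p \in dom n'
}.

Section Semantics.
Variables (P N : finType) (R : Type) (Neg : negotiation P N R).

Definition config := {ffun P -> {set N}}.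

Definition C_init : config := [ffun _ => [set n_init Neg]].
Definition C_fin : config := [ffun _ => [set n_fin Neg]].

Definition enabled (C : config) (n : N) : Prop :=
  forall p, p \in dom Neg n -> n \in C p.

Definition step (C : config) (n : N) (a : R) (C' : config) : Prop :=
  enabled C n /\ out Neg n a /\
  C' = [ffun p => if p \in dom Neg n then delta Neg n a p else C p].

Inductive run : config -> list (N * R) -> config -> Prop :=
  | run_nil C : run C nil C
  | run_cons C n a C' w C'' :
      step C n a C' -> run C' w C'' -> run C ((n, a) :: w) C''.

Definition reachable (C : config) : Prop := exists w, run C_init w C.

Definition sound : Prop :=
  forall w C, run C_init w C -> exists w', run C w' C_fin.

Definition edge (m n' : N) : Prop :=
  exists a p, out Neg m a /\ p \in dom Neg m /\ n' \in delta Neg m a p.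

Definition acyclic : Prop :=
  forall n, ~ Relation_Operators.clos_trans N edge n n.

Definition linear_order (le : N -> N -> Prop) : Prop :=
  (forall x, le x x) /\
  (forall x y, le x y -> le y x -> x = y) /\
  (forall x y z, le x y -> le y z -> le x z) /\
  (forall x y, le x y \/ le y x).

Definition topological_order (le : N -> N -> Prop) : Prop :=
  linear_order le /\ forall m n, edge m n -> le m n.

Definition deterministic (p : P) : Prop :=
  forall n a, p \in dom Neg n -> out Neg n a -> #|delta Neg n a p| = 1.

Definition weakly_nondeterministic : Prop :=
  forall n, exists2 p, p \in dom Neg n & deterministic p.

End Semantics.

(* Main.v *)
Require Import Defs.
From mathcomp Require Import all_boot.
From Stdlib Require List.

Set Implicit Arguments.
Unset Strict Implicit.
Unset Printing Implicit Defensive.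

Lemma inv_det (P N : finType) (R : Type) (Neg : negotiation P N R) C0 w C' :
  run Neg C0 w C' ->
  (forall d, deterministic Neg d -> exists x, C0 d = [set x]) ->
  forall d, deterministic Neg d -> exists x, C' d = [set x].
Proof.
elim => {C0 w C'} [C0|C0 m a C1 w C2 [Hen [Hout ->]] _ IH] H //.
apply: IH => d Hd; rewrite ffunE; case: ifP => Hdm.
  by apply/cards1P/eqP; apply: Hd.
exact: H.
Qed.

Lemma nodes_ge (P N : finType) (R : Type) (Neg : negotiation P N R)
  (le : N -> N -> Prop) (n : N) :
  topological_order Neg le -> weakly_nondeterministic Neg ->
  forall C0 w C', run Neg C0 w C' ->
  (forall d, deterministic Neg d -> exists2 x, C0 d = [set x] & le n x) ->
  forall m a, List.In (m, a) w -> le n m.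
Proof.
move=> [[_ [_ [Htr _]]] Hedge] Hwnd.
move=> C0 w C'; elim => {C0 w C'} [C0|C0 m a C1 w C2 [Hen [Hout HC1]] _ IH] H m' a' //=.
have Hnm : le n m.
  case: (Hwnd m) => d Hdm Hd; case: (H d Hd) => x Hx Hnx.
  by have := Hen d Hdm; rewrite Hx in_set1 => /eqP ->.
case => [[<- _]|Hin]; first done.
apply: IH Hin => d Hd; rewrite HC1 ffunE; case: ifP => Hdm; last exact: H.
have /eqP/cards1P [x Hx] := Hd m a Hdm Hout.
exists x => //; apply: Htr Hnm _; apply: Hedge.
by exists a, d; split=> //; split=> //; rewrite Hx set11.
Qed.

Lemma part1 (P N : finType) (R : Type) (Neg : negotiation P N R)
  (le : N -> N -> Prop) (n : N) (d : P) :
  topological_order Neg le ->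
  forall C0 w C', run Neg C0 w C' -> C' = C_fin Neg ->
  C0 d = [set n] -> (forall m a, List.In (m, a) w -> le n m) ->
  enabled Neg C0 n.
Proof.
move=> [[_ [Hanti _]] Hedge].
move=> C0 w C'; elim => {C0 w C'} [C0|C0 m a C1 w C2 [Hen [Hout HC1]] _ IH] Hfin Hd Hall.
  subst C0; move: Hd; rewrite ffunE => Hd.
  have : n \in [set n_fin Neg] by rewrite Hd set11.
  rewrite in_set1 => /eqP ->; move=> p _; by rewrite ffunE set11.
case: (eqVneq m n) => [<-|Hmn]; first exact: Hen.
have Hnm : le n m by apply: (Hall m a); left.
have Hno : forall p, p \in dom Neg m -> n \in delta Neg m a p -> False.
  move=> p Hp Hn; move/eqP: Hmn; apply; apply: Hanti => //; apply: Hedge.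
  by exists a, p.
have IH' := IH Hfin.
have Hen1 : enabled Neg C1 n.
  apply: IH'; last by move=> m' a' Hin; apply: (Hall m' a'); right.
  rewrite HC1 ffunE; case: ifP => // Hdm.
  have := Hen d Hdm; rewrite Hd in_set1 => /eqP Hm.
  by rewrite Hm eqxx in Hmn.
move=> p Hp; have := Hen1 p Hp; rewrite HC1 ffunE; case: ifP => // Hpm Hn.
by case: (Hno p Hpm Hn).
Qed.

Theorem lemma4p7 (P N : finType) (R : Type) (Neg : negotiation P N R)
  (le : N -> N -> Prop) (C : config P N) (n : N) :
  acyclic Neg ->
  weakly_nondeterministic Neg ->
  topological_order Neg le ->
  reachable Neg C ->
  (exists d, deterministic Neg d /\ C d = [set n]) ->
  (forall n', (exists d', deterministic Neg d' /\ C d' = [set n']) -> le n n') ->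
  (sound Neg -> enabled Neg C n) /\
  (forall w, run Neg C w (C_fin Neg) ->
     forall n' a, List.In (n', a) w -> le n n').
Proof.
move=> _ Hwnd Htop [w0 Hw0] [d [Hd HCd]] Hmin.
have Hinv : forall d', deterministic Neg d' -> exists2 x, C d' = [set x] & le n x.
  move=> d' Hd'.
  have [x Hx] := inv_det Hw0 (fun d _ => ex_intro _ (n_init Neg) (ffunE _ d)) Hd'.
  exists x => //; apply: Hmin; by exists d'.
have H2 : forall w, run Neg C w (C_fin Neg) ->
     forall n' a, List.In (n', a) w -> le n n'.
  move=> w Hw; exact: nodes_ge Htop Hwnd _ _ _ Hw Hinv.
split=> // Hsound.
have [w Hw] := Hsound w0 C Hw0.
apply: (@part1 _ _ _ Neg le n d Htop _ _ _ Hw erefl HCd); exact: H2 w Hw.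
Qed.
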